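(* Let $n$ be even and let $G$ be a $k$-regular graph on $n$ vertices with $\mu(G)<k$. Then $n\ge 3k-2$. If moreover $n\le 3k-1$, then $\mu(G)=k-1$.
   Context: All graphs are finite and simple. For a graph $G=(V,E)$ on $n$ vertices, a fractional vertex cover is a function $f:V\to[0,\infty)$ with $f(u)+f(v)\ge 1$ for every edge $uv\in E$; $\tau^*(G)$ denotes the minimum of $\sum_{v\in V}f(v)$ over all fractional vertex covers. For $E'\subseteq E$ let $G-E'=(V,E\setminus E')$. Define $\mu(G)=\min\{|E'| : E'\subseteq E,\ \tau^*(G-E')<n/2\}$. *)

(* Defs.v *)
From mathcomp Require Import all_boot all_order all_algebra.
From mathcomp Require Import boolp classical_sets reals.
Set Implicit Arguments. Unset Strict Implicit. Unset Printing Implicit Defensive.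
Import Order.TTheory GRing.Theory Num.Theory.
Local Open Scope ring_scope.

Definition simple_graph (T : finType) (e : rel T) : Prop :=
  symmetric e /\ irreflexive e.

Definition edges (T : finType) (e : rel T) : {set {set T}} :=
  [set A : {set T} | [exists u, exists v, e u v && (A == [set u; v])]].

Definition regular (T : finType) (e : rel T) (k : nat) : Prop :=
  forall v : T, #|[set u | e v u]| = k.

Definition del_edges (T : finType) (e : rel T) (E' : {set {set T}}) : rel T :=
  fun u v => e u v && ([set u; v] \notin E').

Definition frac_cover (R : realType) (T : finType) (e : rel T) (f : T -> R) : Prop :=
  (forall v, 0 <= f v) /\ (forall u v, e u v -> 1 <= f u + f v).

(* tau*(G): the minimum (= infimum, attained) of the total weight of
   fractional vertex covers *)
Definition tau_star (R : realType) (T : finType) (e : rel T) : R :=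
  inf (fun s : R => exists f : T -> R, frac_cover e f /\ s = \sum_(v : T) f v).

Definition mu_feasible (R : realType) (T : finType) (e : rel T) (E' : {set {set T}}) : Prop :=
  E' \subset edges e /\ tau_star R (del_edges e E') < (#|T|%:R / 2).

Definition mu_is (R : realType) (T : finType) (e : rel T) (m : nat) : Prop :=
  (exists E', mu_feasible R e E' /\ #|E'| = m) /\
  (forall E', mu_feasible R e E' -> (m <= #|E'|)%N).

(* Main.v *)
Require Import Defs.
From mathcomp Require Import all_boot all_order all_algebra.
From mathcomp Require Import boolp classical_sets reals.
From mathcomp Require Import zify ring lra.

Set Implicit Arguments. Unset Strict Implicit. Unset Printing Implicit Defensive.
Import Order.TTheory GRing.Theory Num.Theory.

Lemma arith (k m s p r Q X D Y Z W Dn n: nat) :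
 s * k = Q+X -> Q <= s * p -> Q + D = p * k -> r * k <= Dn + Y + r * (r-1) -> Dn <= D ->
 X = Z+W -> Y = W -> Z <= s * (s-1) -> X + Y <= 2 * m -> n = s+p+r -> m < k ->
 ~~ odd n -> p < s ->
 3 * k-2 <= n /\ (n <= 3 * k-1 -> k-1 <= m).
Proof.
move=> e1 e2 e3 e4 e5 e6 e7 e8 e9 en mk ev ps.
have hsp : (s - p) * k <= X by rewrite mulnBl; lia.
have hs : s = p.+1.
  case: (leqP (s - p) 1) => h; first lia.
  have : 2 * k <= X by apply: leq_trans hsp; rewrite leq_mul2r h orbT.
  lia.
subst s.
have r0 : r != 0.
  apply/negP => /eqP r0; move: ev; rewrite en r0 addn0 addSn addnn /= odd_double //.
have hkD : k + D = X by rewrite mulSn in e1; lia.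
have hr : k < r.
  rewrite ltnNge; apply/negP => rk.
  have : r * k <= k - 2 + r * (r - 1) by lia.
  have : (r - 1) * (k - r) + r * (r-1) + k <= r * k.
    nia.
  nia.
have hX : X <= 2 * m by lia.
have hQ : (p.+1) * k <= p.+1 * p + X by lia.
split.
- case: (leqP (k - 2) p) => hp; first lia.
  have [p0|[p1|p2]] : p = 0 \/ p = 1 \/ 2 <= p by lia.
  + subst p; lia.
  + subst p; lia.
  + have [i pi] : exists i, p = i + 2 by exists (p - 2); lia.
    have [j kj] : exists j, k = i + 5 + j by exists (k - i - 5); lia.
    subst p k; clear -hQ hX mk hp; nia.
- move=> hn.
  case: (leqP (k - 1) p) => hp; first lia.
  have [p0|[p1|p2]] : p = 0 \/ p = 1 \/ 2 <= p by lia.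
  + subst p; lia.
  + subst p; lia.
  + have [i pi] : exists i, p = i + 2 by exists (p - 2); lia.
    have [j kj] : exists j, k = i + 4 + j by exists (k - i - 4); lia.
    subst p k; clear -hQ hX mk hp; nia.
Qed.

Section Comb.
Variables (T : finType) (e : rel T) (k : nat) (E' : {set {set T}}).
Hypotheses (esym : symmetric e) (eirr : irreflexive e) (reg : regular e k)
  (Esub : E' \subset edges e).

Definition bad u v := e u v && ([set u; v] \in E').
Definition deg (Y : {set T}) v := \sum_(y in Y) (e v y : nat).
Definition bdeg (Y : {set T}) v := \sum_(y in Y) (bad v y : nat).

Lemma sum_sub (A B : {set T}) (F : T -> nat) :
  A \subset B -> \sum_(i in A) F i <= \sum_(i in B) F i.
Proof. by move=> sAB; rewrite [X in _ <= X](big_setID A) /= (finset.setIidPr sAB) leq_addr. Qed.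

Lemma sum_split (A B : {set T}) (F : T -> nat) :
  \sum_(i in B) F i = \sum_(i in B :&: A) F i + \sum_(i in B :\: A) F i.
Proof. by rewrite (big_setID A). Qed.

Lemma sum_le_card (A : {set T}) (P : T -> bool) :
  \sum_(i in A) (P i : nat) <= #|A|.
Proof. rewrite -sum1_card; apply: leq_sum => i _; by case: (P i). Qed.

Lemma sum_le_card1 (A : {set T}) (P : T -> bool) v :
  v \in A -> P v = false -> \sum_(i in A) (P i : nat) <= #|A| - 1.
Proof.
move=> vA Pv; rewrite (big_setD1 _ vA) Pv /= add0n (cardsD1 v A) vA add1n subn1 /=.
exact: sum_le_card.
Qed.

Lemma deg_all v : deg [set: T] v = k.
Proof.
rewrite /deg -(reg v) -sum1_card [RHS]big_mkcond [LHS]big_mkcond /=; apply: eq_bigr => y _.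
by rewrite !finset.inE; case: (e v y).
Qed.

Lemma badsym u v : bad u v = bad v u.
Proof. by rewrite /bad esym finset.setUC. Qed.

Lemma bad_e u v : (bad u v : nat) <= e u v.
Proof. rewrite /bad. by case: (e u v); case: ([set u; v] \in E'). Qed.

Lemma dcount (X Y : {set T}) : \sum_(x in X) deg Y x = \sum_(y in Y) deg X y.
Proof.
rewrite /deg exchange_big; apply: eq_bigr => y _; apply: eq_bigr => x _.
by rewrite esym.
Qed.

Lemma bdcount (X Y : {set T}) : \sum_(x in X) bdeg Y x = \sum_(y in Y) bdeg X y.
Proof.
rewrite /bdeg exchange_big; apply: eq_bigr => y _; apply: eq_bigr => x _.
by rewrite badsym.
Qed.

Lemma bad_total : \sum_(v in [set: T]) bdeg [set: T] v <= 2 * #|E'|.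
Proof.
have H1 v : bdeg [set: T] v <= #|[set A in E' | v \in A]|.
  have -> : bdeg [set: T] v = #|[set y | bad v y]|.
    rewrite /bdeg -sum1_card [RHS]big_mkcond [LHS]big_mkcond /=; apply: eq_bigr => y _.
    by rewrite !finset.inE; case: (bad v y).
  rewrite -(@card_in_imset _ _ (fun y => [set v; y])).
    apply: subset_leq_card; apply/fintype.subsetP => A /imsetP [y].
    rewrite finset.inE => /andP[_ yE] ->; by rewrite finset.inE yE set21.
  move=> y1 y2; rewrite !finset.inE => /andP [b1 _] /andP [b2 _] eq12.
  have : y1 \in [set v; y2] by rewrite -eq12 set22.
  rewrite !finset.inE => /orP [/eqP h|/eqP //]; by rewrite h eirr in b1.
apply: leq_trans; first by apply: leq_sum => v _; exact: H1.
have -> : \sum_(v in [set: T]) #|[set A in E' | v \in A]| =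
          \sum_(v in [set: T]) \sum_(A in E') ((v \in A) : nat).
  apply: eq_bigr => v _; rewrite -sum1_card big_mkcond /= [in RHS]big_mkcond /=.
  by apply: eq_bigr => A _; rewrite !finset.inE; case: (A \in E'); case: (v \in A).
rewrite exchange_big /= mulnC -sum_nat_const; apply: leq_sum => A AE.
have : A \in edges e by apply: (fintype.subsetP Esub).
rewrite finset.inE => /existsP [u] /existsP [w] /andP [_ /eqP ->].
have -> : \sum_(v in [set: T]) ((v \in [set u; w]) : nat) = #|[set u; w]|.
  rewrite -sum1_card [RHS]big_mkcond [LHS]big_mkcond /=; apply: eq_bigr => y _.
  by rewrite !finset.inE; case: (_ || _).
by rewrite cards2; case: (u != w).
Qed.

Variables (S N : {set T}).
Hypotheses (SN : forall v, v \in S -> v \notin N) (pS : #|N| < #|S|)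
  (Hnb : forall u v, u \in S -> del_edges e E' u v -> v \in N).
Let R := ~: (S :|: N).

Lemma RS v : v \in R -> v \notin S.
Proof. by rewrite !finset.inE negb_or => /andP[]. Qed.
Lemma RN v : v \in R -> v \notin N.
Proof. by rewrite !finset.inE negb_or => /andP[]. Qed.

Lemma setCN_S : ~: N :&: S = S.
Proof. apply/setP => v; rewrite !finset.inE; case vS: (v \in S); rewrite ?andbF //= andbT.
  exact: SN. Qed.
Lemma setCN_R : ~: N :\: S = R.
Proof. by apply/setP => v; rewrite !finset.inE negb_or andbC. Qed.
Lemma setCS_R : ~: S :&: R = R.
Proof. by apply/setP => v; rewrite !finset.inE negb_or; case: (v \in S). Qed.
Lemma setTN : [set: T] :&: N = N. Proof. by rewrite finset.setTI. Qed.
Lemma setTCN : [set: T] :\: N = ~: N. Proof. by rewrite finset.setTD. Qed.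

Lemma deg_splitN v : k = deg N v + deg (~: N) v.
Proof. by rewrite -(deg_all v) /deg (sum_split N) setTN setTCN. Qed.
Lemma deg_splitS v : k = deg S v + deg (~: S) v.
Proof. by rewrite -(deg_all v) /deg (sum_split S) finset.setTI finset.setTD. Qed.
Lemma deg_CN v : deg (~: N) v = deg S v + deg R v.
Proof. by rewrite /deg (sum_split S) setCN_S setCN_R. Qed.
Lemma bdeg_CN v : bdeg (~: N) v = bdeg S v + bdeg R v.
Proof. by rewrite /bdeg (sum_split S) setCN_S setCN_R. Qed.

Lemma degS_bad u : u \in S -> deg (~: N) u = bdeg (~: N) u.
Proof.
move=> uS; apply: eq_bigr => y; rewrite finset.inE => yN.
rewrite /bad; case euy: (e u y) => //=.
case yE: ([set u; y] \in E') => //.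
by move: (@Hnb u y uS); rewrite /del_edges euy yE (negbTE yN) => /(_ isT).
Qed.

Lemma degR_bad w : w \in R -> deg S w = bdeg S w.
Proof.
move=> wR; apply: eq_bigr => y yS.
rewrite badsym /bad esym; case eyw: (e y w) => //=.
case yE: ([set y; w] \in E') => //.
by move: (@Hnb y w yS); rewrite /del_edges eyw yE (negbTE (RN wR)) => /(_ isT).
Qed.

Lemma card_split : #|T| = #|S| + #|N| + #|R|.
Proof.
rewrite -(cardsC (S :|: N)) cardsU.
have -> : S :&: N = finset.set0.
  by apply/setP => v; rewrite !finset.inE; case vS: (v \in S); rewrite //= (negbTE (SN vS)).
by rewrite cards0 subn0.
Qed.

Lemma comb_main : #|E'| < k -> ~~ odd #|T| ->
  3 * k - 2 <= #|T| /\ (#|T| <= 3 * k - 1 -> k - 1 <= #|E'|).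
Proof.
move=> mk ev.
set m := #|E'|.
set s := #|S|; set p := #|N|; set r := #|R|.
set Q := \sum_(u in S) deg N u.
set X := \sum_(u in S) bdeg (~: N) u.
set D := \sum_(y in N) deg (~: S) y.
set Y := \sum_(w in R) bdeg S w.
set Z := \sum_(u in S) bdeg S u.
set W := \sum_(u in S) bdeg R u.
set Dn := \sum_(w in R) deg N w.
have e1 : s * k = Q + X.
  rewrite /s -sum_nat_const /Q /X -big_split /=; apply: eq_bigr => u uS.
  by rewrite -degS_bad // -deg_splitN.
have e2 : Q <= s * p.
  rewrite /s -sum_nat_const; apply: leq_sum => u _; exact: sum_le_card.
have e3 : Q + D = p * k.
  rewrite /Q dcount /p -sum_nat_const /D -big_split /=; apply: eq_bigr => y _.
  by rewrite -deg_splitS.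
have e4 : r * k <= Dn + Y + r * (r - 1).
  rewrite /r -sum_nat_const /Dn /Y -sum_nat_const -!big_split /=.
  apply: leq_sum => w wR.
  rewrite (deg_splitN w) deg_CN -degR_bad // -addnA leq_add2l leq_add2l.
  apply: (sum_le_card1 wR); exact: eirr.
have e5 : Dn <= D.
  rewrite /Dn dcount /D; apply: leq_sum => y _.
  rewrite /deg [X in _ <= X](sum_split R) setCS_R; exact: leq_addr.
have e6 : X = Z + W.
  by rewrite /X /Z /W -big_split /=; apply: eq_bigr => u _; rewrite bdeg_CN.
have e7 : Y = W by rewrite /Y /W bdcount.
have e8 : Z <= s * (s - 1).
  rewrite /s -sum_nat_const; apply: leq_sum => u uS.
  apply: (sum_le_card1 uS); by rewrite /bad eirr.
have e9 : X + Y <= 2 * m.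
  apply: leq_trans (bad_total).
  rewrite [X in _ <= X](sum_split S) finset.setTI finset.setTD.
  apply: leq_add.
    apply: leq_sum => u _; rewrite /bdeg [X in _ <= X](sum_split (~: N)) finset.setTI.
    exact: leq_addr.
  apply: leq_trans (sum_sub _ (_ : R \subset ~: S)); last first.
    by apply/fintype.subsetP => v /RS; rewrite finset.inE.
  apply: leq_sum => w _; rewrite /bdeg [X in _ <= X](sum_split S) finset.setTI.
  exact: leq_addr.
have en := card_split.
rewrite -/s -/p -/r in en.
exact: (arith e1 e2 e3 e4 e5 e6 e7 e8 e9 en mk ev pS).
Qed.
End Comb.

Section Thr.
Local Open Scope ring_scope.
Lemma ex_min (R: realDomainType) (T: finType) (h : T -> R) (v1 : T) : exists v0, forall v, h v0 <= h v.
Proof. case: (@arg_minP _ R T v1 predT h isT) => i _ H; exists i => v; exact: H. Qed.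

Lemma thresh (R : realFieldType) (T : finType) (n : nat) (h : T -> R) :
  (#|[set v | (h v < 0)%R]| <= n)%N ->
  (forall t, 0 < t -> (#|[set v | (h v <= - t)%R]| <= #|[set v | (t <= h v)%R]|)%N) ->
  0 <= \sum_v h v.
Proof.
elim: n h => [|n IH] h hn hc.
  apply: sumr_ge0 => v _; rewrite leNgt; apply/negP => hv.
  by move: hn; rewrite leqn0 => /eqP/cards0_eq/setP/(_ v); rewrite !finset.inE hv.
case: (pickP (fun v => h v < 0)) => [v1 v1n|allnn]; last first.
  by apply: sumr_ge0 => v _; rewrite leNgt allnn.
have [v0 hv0] := ex_min h v1.
set x := - h v0.
have x0 : 0 < x by rewrite /x oppr_gt0; exact: le_lt_trans (hv0 v1) v1n.
have : (0 < #|[set v | (x <= h v)%R]|)%N.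
  apply: leq_trans (hc x x0); apply/card_gt0P; exists v0; by rewrite finset.inE /x opprK.
case/card_gt0P => w; rewrite finset.inE => xw.
have wv0 : w != v0.
  by apply/eqP => wv; rewrite wv /x in xw x0; lra.
pose h' v := h v + (v == v0)%:R * x - (v == w)%:R * x.
have hv0' : h' v0 = 0 by rewrite /h' eqxx eq_sym (negbTE wv0) /= mulr1n mul1r mul0r subr0 /x addrN.
have hw' : h' w = h w - x by rewrite /h' eqxx (negbTE wv0) /= mulr1n mul1r mul0r addr0.
have ho : forall v, v != v0 -> v != w -> h' v = h v.
  by move=> v nv0 nw; rewrite /h' (negbTE nv0) (negbTE nw) /= mul0r addr0 subr0.
have sum_eq : \sum_v h' v = \sum_v h v.
  have ind : forall u : T, \sum_(i : T) ((i == u)%:R * x) = x.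
    move=> u; rewrite (bigD1 u) //= eqxx mulr1n mul1r big1 ?addr0 //.
    by move=> i /negbTE ->; rewrite mul0r.
  by rewrite /h' sumrB big_split /= !ind addrK.
rewrite -sum_eq; apply: IH.
  have v0n : v0 \in [set v | h v < 0] by rewrite finset.inE; exact: le_lt_trans (hv0 v1) v1n.
  move: hn; rewrite (cardsD1 v0) v0n add1n ltnS; apply: leq_trans.
  apply: subset_leq_card; apply/fintype.subsetP => v; rewrite !finset.inE.
  case: (eqVneq v v0) => [->|nv0]; first by rewrite hv0' ltxx.
  case: (eqVneq v w) => [->|nw]; first by rewrite hw'; lra.
  by rewrite ho.
move=> t t0.
have [tx|xt] := leP t x.
  have v0A : v0 \in [set v | (h v <= - t)%R] by rewrite finset.inE; rewrite /x in tx; lra.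
  have wB : w \in [set v | (t <= h v)%R] by rewrite finset.inE; lra.
  have := hc t t0; rewrite (cardsD1 v0) v0A (cardsD1 w [set v | (t <= h v)%R]) wB !add1n ltnS.
  move=> H; apply: leq_trans (leq_trans H _).
    apply: subset_leq_card; apply/fintype.subsetP => v; rewrite !finset.inE.
    case: (eqVneq v v0) => [->|nv0]; first by rewrite hv0'; lra.
    case: (eqVneq v w) => [->|nw]; first by rewrite hw'; lra.
    by rewrite ho.
  apply: subset_leq_card; apply/fintype.subsetP => v; rewrite !finset.inE.
  case: (eqVneq v w) => [->|nw] //=.
  case: (eqVneq v v0) => [->|nv0] /=; first by rewrite /x in tx; lra.
  by rewrite ho.
have -> : [set v | h' v <= - t] = finset.set0.
  apply/setP => v; rewrite !finset.inE.
  case: (eqVneq v v0) => [->|nv0]; first by rewrite hv0'; lra.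
  case: (eqVneq v w) => [->|nw]; first by rewrite hw'; lra.
  rewrite ho //; have := hv0 v; rewrite /x in xt; lra.
by rewrite cards0.
Qed.

End Thr.

Theorem lemma27 (R : realType) (T : finType) (e : rel T) (k m : nat) :
  simple_graph e -> ~~ odd #|T| -> regular e k ->
  mu_is R e m -> (m < k)%N ->
  (3 * k - 2 <= #|T|)%N /\ ((#|T| <= 3 * k - 1)%N -> m = (k - 1)%N).
Proof.
move=> [esym eirr] ev reg [[E' [[Esub Hlt] cE]] Hmin] mk.
have ne : ((fun s : R => exists f : T -> R, frac_cover (del_edges e E') f /\ (s = \sum_(v : T) f v)%R) !=set0)%classic.
  exists (\sum_(v : T) (1 : R))%R; exists (fun _ => 1%R); split => //; split.
    by move=> v; exact: ler01.
  by move=> u v _; lra.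
have [y [f [[f0 fc] ->]] ylt] := inf_lt ne Hlt.
pose h v := (f v - 1 / 2)%R.
have hneg : (\sum_(v : T) h v < 0)%R.
  rewrite /h sumrB sumr_const -mulr_natl.
  move: ylt; set a := (\sum_(v : T) f v)%R; set b := (#|T|%:R)%R.
  have -> : #|[pred v : T | true]| = #|T| by [].
  rewrite -/b; lra.
have [t [t0 ht]] : exists t : R, (0 < t)%R /\
    (#|[set v | (t <= h v)%R]| < #|[set v | (h v <= - t)%R]|)%N.
  apply: contrapT => nex.
  have := @thresh R T #|T| h (max_card _).
  have H : forall t : R, (0 < t)%R ->
      (#|[set v | (h v <= - t)%R]| <= #|[set v | (t <= h v)%R]|)%N.
    move=> t t0; rewrite leqNgt; apply/negP => lt; apply: nex; exists t; split => //.
  move=> /(_ H) hge; lra.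
have SN : forall v, v \in [set v | (h v <= - t)%R] -> v \notin [set v | (t <= h v)%R].
  move=> v; rewrite !finset.inE => hv; apply/negP => hv'; lra.
have Hnb : forall u v, u \in [set v | (h v <= - t)%R] -> del_edges e E' u v ->
    v \in [set v | (t <= h v)%R].
  move=> u v; rewrite !finset.inE /h => hu huv; have := fc u v huv; lra.
have mk' : (#|E'| < k)%N by rewrite cE.
have [h1 h2] := comb_main esym eirr reg Esub SN ht Hnb mk' ev.
split => // hn; have := h2 hn; rewrite cE; lia.
Qed.
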